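(* For non-negative integers $p_1,p_2,r$, integers $k_1,k_2$ and $x_1,x_2\in\mathbb{C}$, $$\sum_{j_1=0}^{p_1}\sum_{j_2=0}^{p_2}\sum_{l=0}^{j_1+j_2}\binom{p_1}{j_1}\binom{p_2}{j_2}B^{(k_1)}_{p_1-j_1}(x_1)B^{(k_2)}_{p_2-j_2}(x_2)S(j_1+j_2,l)(-1)^{l}(l+r)!=r!\,B^{(k_1)}_{p_1}(x_1-r-1)\,B^{(k_2)}_{p_2}(x_2-r-1),$$ and the left-hand side also equals $$\sum_{j_1=0}^{p_1}\sum_{j_2=0}^{p_2}\sum_{l=0}^{j_1+j_2}\binom{p_1}{j_1}\binom{p_2}{j_2}B^{(k_1)}_{p_1-j_1}(x_1-1)B^{(k_2)}_{p_2-j_2}(x_2-1)S(j_1+j_2+1,l+1)(-1)^{l}(l+r)!.$$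
   Context: $S(n,l)$ denotes the Stirling numbers of the second kind, $S(n,l)=\frac{1}{l!}\sum_{j=0}^{l}(-1)^j\binom{l}{j}(l-j)^n$ (with $0^0=1$). For an integer $k$, a non-negative integer $n$ and $x\in\mathbb{C}$, the poly-Bernoulli polynomial is $B_{n}^{(k)}(x)=\sum_{l=0}^{n}\frac{1}{(l+1)^{k}}\sum_{j=0}^{l}(-1)^{j}\binom{l}{j}(j+x)^{n}$. *)

(* Defs.v *)
From mathcomp Require Import all_boot all_order all_algebra.
From mathcomp Require Import reals.
From mathcomp.real_closed Require Import complex.
Set Implicit Arguments. Unset Strict Implicit. Unset Printing Implicit Defensive.
Import Order.TTheory GRing.Theory Num.Theory.
Local Open Scope ring_scope.

Definition stirling2 {F : fieldType} (n l : nat) : F :=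
  (l`!%:R)^-1 * \sum_(0 <= j < l.+1) (-1) ^+ j * 'C(l, j)%:R * ((l - j)%:R) ^+ n.

Definition polyBernoulli {F : fieldType} (k : int) (n : nat) (x : F) : F :=
  \sum_(0 <= l < n.+1) ((l.+1)%:R ^ k)^-1 *
     \sum_(0 <= j < l.+1) (-1) ^+ j * 'C(l, j)%:R * (j%:R + x) ^+ n.

(* Main.v *)
Require Import Defs.
From mathcomp Require Import all_boot all_order all_algebra.
From mathcomp Require Import ring lra.
From mathcomp Require Import reals.
From mathcomp.real_closed Require Import complex.
Import Order.TTheory GRing.Theory Num.Theory.
Local Open Scope ring_scope.
Section Aux.
Variable F : numFieldType.
Definition E (l m : nat) (x : F) : F :=
  \sum_(0 <= i < l.+1) (-1) ^+ i * 'C(l, i)%:R * (i%:R + x) ^+ m.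
Lemma E_rec l m x : E l m.+1 x = x * E l m x - l%:R * E l.-1 m (x + 1).
Proof.
rewrite /E big_distrr /=.
case: l => [|l].
  by rewrite !big_nat1 /= mul0r subr0 !expr0 !mul1r add0r exprS.
rewrite /= big_distrr /=.
have -> : \sum_(0 <= i < l.+2) (-1) ^+ i * 'C(l.+1, i)%:R * (i%:R + x) ^+ m.+1
  = \sum_(0 <= i < l.+2) x * ((-1) ^+ i * 'C(l.+1, i)%:R * (i%:R + x) ^+ m)
   + \sum_(0 <= i < l.+2) (-1) ^+ i * 'C(l.+1, i)%:R * i%:R * (i%:R + x) ^+ m.
  rewrite -big_split; apply: eq_bigr => i _ /=; rewrite exprS; ring.
congr (_ + _).
rewrite [LHS]big_nat_recl // /= mulr0 mul0r add0r -sumrN /=.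
apply: eq_bigr => i _.
have Hb : (l.+1 * 'C(l, i) = i.+1 * 'C(l.+1, i.+1))%N by rewrite -mul_bin_diag.
have Hb' : l.+1%:R * 'C(l, i)%:R = i.+1%:R * 'C(l.+1, i.+1)%:R :> F by rewrite -!natrM Hb.
rewrite (_ : i%:R + (x + 1) = i.+1%:R + x); last by rewrite -natr1; ring.
rewrite exprS mulN1r.
transitivity (- ((-1) ^+ i * (l.+1%:R * 'C(l, i)%:R) * (i.+1%:R + x) ^+ m)); last by ring.
rewrite Hb'; ring.
Qed.

Lemma E0 l x : E l 0 x = (l == 0%N)%:R.
Proof.
rewrite /E; under eq_bigr do rewrite expr0 mulr1.
case: l => [|l]; first by rewrite big_nat1 expr0 mulr1.
have := exprDn (1 : F) (-1) l.+1.
rewrite subrr expr0n /= => /esym H.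
rewrite big_mkord -[RHS]H; apply: eq_bigr => i _.
by rewrite expr1n mul1r mulr_natr.
Qed.

Lemma E_vanish m l x : (m < l)%N -> E l m x = 0.
Proof.
elim: m l x => [|m IH] l x Hl.
  by rewrite E0; case: l Hl.
case: l Hl => [|l] // Hl.
by rewrite E_rec /= !IH ?mulr0 ?subr0 // ltnW.
Qed.

Lemma pB_ext k n N x : (n <= N)%N ->
  polyBernoulli k n x = \sum_(0 <= l < N.+1) ((l.+1)%:R ^ k)^-1 * E l n x.
Proof.
move=> HN; rewrite (big_cat_nat _ (n:=n.+1)) //=.
rewrite [X in _ = _ + X]big_nat_cond [X in _ = _ + X]big1 ?addr0 // => l /andP[/andP[Hl _] _].
by rewrite E_vanish ?mulr0.
Qed.

Lemma appell k p (x y : F) :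
  \sum_(0 <= j < p.+1) 'C(p, j)%:R * polyBernoulli k (p - j) x * y ^+ j
  = polyBernoulli k p (x + y) :> F.
Proof.
transitivity (\sum_(0 <= j < p.+1) \sum_(0 <= l < p.+1) \sum_(0 <= i < l.+1)
   ((l.+1)%:R ^ k)^-1 * ((-1) ^+ i * 'C(l, i)%:R) * ('C(p, j)%:R * (i%:R + x) ^+ (p - j) * y ^+ j)).
  apply: eq_bigr => j _; rewrite (@pB_ext k (p - j) p x (leq_subr j p)) big_distrr big_distrl /=.
  apply: eq_bigr => l _; rewrite /E big_distrr big_distrr big_distrl /=.
  apply: eq_bigr => i _; ring.
rewrite exchange_big_nat /=; apply: eq_bigr => l _.
rewrite exchange_big_nat /= big_distrr /=; apply: eq_bigr => i _.
rewrite -big_distrr /= addrA exprDn.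
rewrite big_mkord !mulrA; congr (_ * _); apply: eq_bigr => j _; rewrite mulr_natl; ring.
Qed.

Definition G (r N n : nat) (x : F) : F :=
  \sum_(0 <= l < N.+1) 'C(l + r, r)%:R * E l n x.

Lemma binid l r : ('C(l.+1 + r, r) * l.+1 = r.+1 * 'C(l + r.+1, r.+1))%N.
Proof.
rewrite addnS -mul_bin_diag /= addSn.
have H1 : 'C((l + r).+1, r) = 'C((l+r).+1, l.+1).
  rewrite -(@bin_sub (l+r).+1 r); last by rewrite ltnW // ltnS leq_addl.
  by rewrite subSn ?leq_addl // addnK.
rewrite H1 mulnC -mul_bin_diag /=.
by rewrite -(@bin_sub (l+r) l) ?leq_addr // addKn.
Qed.

Lemma G_val n r N x : (n <= N)%N -> G r N n x = (x - r.+1%:R) ^+ n.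
Proof.
elim: n r N x => [|n IH] r N x HN.
  rewrite /G expr0; under eq_bigr do rewrite E0.
  rewrite big_nat_recl //= binn mulr1 big1 ?addr0 // => l _; by rewrite mulr0.
case: N HN => [|N] // HN.
rewrite /G.
under eq_bigr do rewrite E_rec mulrBr.
rewrite sumrB.
have -> : \sum_(0 <= i < N.+2) 'C(i + r, r)%:R * (x * E i n x) = x * G r N.+1 n x.
  rewrite /G big_distrr; apply: eq_bigr => i _ /=; ring.
rewrite (IH r N.+1 x) //; last by apply: ltnW.
rewrite big_nat_recl //= mul0r mulr0 add0r.
have -> : \sum_(0 <= i < N.+1) 'C(i.+1 + r, r)%:R * (i.+1%:R * E i n (x + 1))
   = r.+1%:R * G r.+1 N n (x + 1).
  rewrite /G big_distrr; apply: eq_bigr => i _.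
  by rewrite /= !mulrA -!natrM binid.
rewrite (IH r.+1 N (x + 1)) // exprS.
rewrite (_ : x + 1 - r.+2%:R = x - r.+1%:R); last by rewrite -[r.+2]addn1 natrD; ring.
ring.
Qed.

Lemma stirE n l : stirling2 n l * (-1) ^+ l * l`!%:R = E l n 0 :> F.
Proof.
rewrite /stirling2.
have Hf : l`!%:R != 0 :> F by rewrite pnatr_eq0 -lt0n fact_gt0.
have Hg : forall (a b c : F), a != 0 -> a^-1 * b * c * a = c * b.
  by move=> a b c Ha; field.
rewrite Hg // big_distrr /= big_nat_rev /=.
apply: eq_big_nat => j /andP[_ Hj].
rewrite add0n subSS subKn // bin_sub // addr0.
have -> : (-1) ^+ l = (-1) ^+ (l - j) * (-1) ^+ j :> F by rewrite -exprD subnK.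
have Hs : (-1) ^+ (l - j) * (-1) ^+ (l - j) = 1 :> F.
  by rewrite -exprMn mulrNN mulr1 expr1n.
transitivity (((-1) ^+ (l - j) * (-1) ^+ (l - j)) * ((-1) ^+ j * 'C(l, j)%:R * j%:R ^+ n) :> F).
  rewrite /=; ring.
by rewrite Hs mul1r.
Qed.

Lemma factr l r : (l + r)`!%:R = 'C(l + r, r)%:R * r`!%:R * l`!%:R :> F.
Proof.
have H := bin_fact (leq_addl l r); rewrite addnK in H.
by rewrite -!natrM -mulnA H.
Qed.

Lemma T1 n r :
  \sum_(0 <= l < n.+1) stirling2 n l * (-1) ^+ l * (l + r)`!%:R
  = r`!%:R * (- (r.+1)%:R) ^+ n :> F.
Proof.
transitivity (r`!%:R * G r n n 0); last by rewrite G_val // sub0r.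
rewrite /G big_distrr; apply: eq_bigr => l _.
rewrite -stirE factr /=; ring.
Qed.

Lemma T2 n r :
  \sum_(0 <= l < n.+1) stirling2 n.+1 l.+1 * (-1) ^+ l * (l + r)`!%:R
  = r`!%:R * (- r%:R) ^+ n :> F.
Proof.
transitivity (r`!%:R * G r n n 1).
  rewrite /G big_distrr; apply: eq_bigr => l _.
  have H := stirE n.+1 l.+1.
  rewrite E_rec /= mul0r add0r factS natrM in H.
  have Hl : l.+1%:R != 0 :> F by rewrite pnatr_eq0.
  have H2 : stirling2 n.+1 l.+1 * (-1) ^+ l * l`!%:R = E l n 1 :> F.
    apply: (mulfI Hl); apply: (@oppr_inj F); rewrite add0r in H; rewrite -H exprS /=; ring.
  rewrite factr -H2 /=; ring.
by rewrite G_val // (_ : 1 - r.+1%:R = - r%:R :> F) // -addn1 natrD; ring.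
Qed.

Lemma factor2 (f g : nat -> F) c n1 n2 :
  \sum_(0 <= j1 < n1) \sum_(0 <= j2 < n2) c * (f j1 * g j2)
  = c * ((\sum_(0 <= j1 < n1) f j1) * (\sum_(0 <= j2 < n2) g j2)).
Proof.
rewrite big_distrl big_distrr /=; apply: eq_bigr => j1 _.
by rewrite big_distrr big_distrr /=.
Qed.

End Aux.

Lemma main_gen (F : numFieldType) (p1 p2 r : nat) (k1 k2 : int) (x1 x2 : F) :
  let LHS : F :=
    \sum_(0 <= j1 < p1.+1) \sum_(0 <= j2 < p2.+1) \sum_(0 <= l < (j1 + j2).+1)
      'C(p1, j1)%:R * 'C(p2, j2)%:R
      * polyBernoulli k1 (p1 - j1) x1 * polyBernoulli k2 (p2 - j2) x2
      * stirling2 (j1 + j2) l * (-1) ^+ l * ((l + r)`!)%:R in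
  LHS = (r`!)%:R * polyBernoulli k1 p1 (x1 - r%:R - 1)
                 * polyBernoulli k2 p2 (x2 - r%:R - 1)
  /\
  LHS =
    \sum_(0 <= j1 < p1.+1) \sum_(0 <= j2 < p2.+1) \sum_(0 <= l < (j1 + j2).+1)
      'C(p1, j1)%:R * 'C(p2, j2)%:R
      * polyBernoulli k1 (p1 - j1) (x1 - 1) * polyBernoulli k2 (p2 - j2) (x2 - 1)
      * stirling2 (j1 + j2).+1 l.+1 * (-1) ^+ l * ((l + r)`!)%:R.
Proof.
move=> LHS.
pose y := - (r.+1)%:R : F.
pose z := - r%:R : F.
have H1 : LHS = (r`!)%:R * polyBernoulli k1 p1 (x1 - r%:R - 1)
                 * polyBernoulli k2 p2 (x2 - r%:R - 1).
  rewrite /LHS.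
  transitivity (\sum_(0 <= j1 < p1.+1) \sum_(0 <= j2 < p2.+1) (r`!)%:R *
    (('C(p1, j1)%:R * polyBernoulli k1 (p1 - j1) x1 * y ^+ j1) *
     ('C(p2, j2)%:R * polyBernoulli k2 (p2 - j2) x2 * y ^+ j2))).
    apply: eq_bigr => j1 _; apply: eq_bigr => j2 _.
    move: (polyBernoulli k1 (p1 - j1) x1) (polyBernoulli k2 (p2 - j2) x2) => b1 b2.
    transitivity ('C(p1, j1)%:R * 'C(p2, j2)%:R
      * b1 * b2 *
      \sum_(0 <= l < (j1 + j2).+1) stirling2 (j1 + j2) l * (-1) ^+ l * ((l + r)`!)%:R).
      rewrite big_distrr; apply: eq_bigr => l _ /=; ring.
    rewrite T1 exprD /y /=; ring.
  rewrite factor2 !appell mulrA.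
  have Ex : forall x : F, x + y = x - r%:R - 1.
    by move=> x; rewrite /y -addn1 natrD; ring.
  by rewrite !Ex.
split => //.
rewrite H1.
transitivity (\sum_(0 <= j1 < p1.+1) \sum_(0 <= j2 < p2.+1) (r`!)%:R *
    (('C(p1, j1)%:R * polyBernoulli k1 (p1 - j1) (x1 - 1) * z ^+ j1) *
     ('C(p2, j2)%:R * polyBernoulli k2 (p2 - j2) (x2 - 1) * z ^+ j2))); last first.
  apply: eq_bigr => j1 _; apply: eq_bigr => j2 _.
  move: (polyBernoulli k1 (p1 - j1) (x1 - 1)) (polyBernoulli k2 (p2 - j2) (x2 - 1)) => b1 b2.
  transitivity ('C(p1, j1)%:R * 'C(p2, j2)%:R
      * b1 * b2 *
      \sum_(0 <= l < (j1 + j2).+1) stirling2 (j1 + j2).+1 l.+1 * (-1) ^+ l * ((l + r)`!)%:R).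
    rewrite T2 exprD /z /=; ring.
  rewrite big_distrr; apply: eq_bigr => l _ /=; ring.
rewrite factor2 !appell mulrA.
have Ex : forall x : F, x - 1 + z = x - r%:R - 1.
  by move=> x; rewrite /z; ring.
by rewrite !Ex.
Qed.

Theorem mainTheorem12 (R : realType) (p1 p2 r : nat) (k1 k2 : int) (x1 x2 : R[i]) :
  let LHS :=
    \sum_(0 <= j1 < p1.+1) \sum_(0 <= j2 < p2.+1) \sum_(0 <= l < (j1 + j2).+1)
      'C(p1, j1)%:R * 'C(p2, j2)%:R
      * polyBernoulli k1 (p1 - j1) x1 * polyBernoulli k2 (p2 - j2) x2
      * stirling2 (j1 + j2) l * (-1) ^+ l * ((l + r)`!)%:R in
  LHS = (r`!)%:R * polyBernoulli k1 p1 (x1 - r%:R - 1)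
                 * polyBernoulli k2 p2 (x2 - r%:R - 1)
  /\
  LHS =
    \sum_(0 <= j1 < p1.+1) \sum_(0 <= j2 < p2.+1) \sum_(0 <= l < (j1 + j2).+1)
      'C(p1, j1)%:R * 'C(p2, j2)%:R
      * polyBernoulli k1 (p1 - j1) (x1 - 1) * polyBernoulli k2 (p2 - j2) (x2 - 1)
      * stirling2 (j1 + j2).+1 l.+1 * (-1) ^+ l * ((l + r)`!)%:R.
Proof. exact: main_gen. Qed.
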